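(* Let $A$ be a commutative unital Banach algebra with unit $1_A$, let $x,y\in A$ be quasinilpotent, and let $\lambda\in\mathbb{C}$. (i) If $\lambda\notin\pi\mathbb{Z}$ and $\cos(\lambda 1_A+x)=\cos(\lambda 1_A+y)$, then $x=y$. (ii) If $\lambda\in\pi\mathbb{Z}$ and $\cos(\lambda 1_A+x)=\cos(\lambda 1_A+y)$, then $x^2=y^2$.
   Context: For $z\in A$, $\cos(z)=\sum_{n=0}^\infty(-1)^n\frac{z^{2n}}{(2n)!}$. An element $x$ is quasinilpotent if $\lim_{n\to\infty}\Vert x^n\Vert^{1/n}=0$. *)

(* Defs.v *)
From HB Require Import structures.
From mathcomp Require Import all_boot all_order all_algebra.
From mathcomp Require Import all_classical all_reals all_analysis.
From mathcomp Require Import complex.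
Import Order.TTheory GRing.Theory Num.Theory.
Import numFieldNormedType.Exports.
Set Implicit Arguments. Unset Strict Implicit. Unset Printing Implicit Defensive.
Local Open Scope ring_scope.
Local Open Scope classical_set_scope.

Definition cmod (R : realType) (a : R[i]) : R := Normc.normc a.

Definition ncvg (R : realType) (A : zmodType) (nrm : A -> R)
    (u : nat -> A) (l : A) : Prop :=
  (fun n => nrm (u n - l)) @ \oo --> (0 : R).

Definition ncauchy (R : realType) (A : zmodType) (nrm : A -> R) (u : nat -> A) : Prop :=
  forall e : R, 0 < e -> exists N : nat,
    forall m n : nat, (N <= m)%N -> (N <= n)%N -> nrm (u m - u n) < e.

(* nrm makes the commutative unital complex algebra A (unit 1 <> 0, which is
   part of comAlgType) a commutative unital Banach algebra:
   nrm is a norm, it is submultiplicative, and A is complete for it. *)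
Record banach_algebra_norm (R : realType) (A : comAlgType R[i]) (nrm : A -> R) : Prop := {
  ban_eq0   : forall x : A, nrm x = 0 -> x = 0;
  ban_triangle : forall x y : A, nrm (x + y) <= nrm x + nrm y;
  ban_scale : forall (a : R[i]) (x : A), nrm (a *: x) = cmod a * nrm x;
  ban_submult : forall x y : A, nrm (x * y) <= nrm x * nrm y;
  ban_complete : forall u : nat -> A, ncauchy nrm u -> exists l : A, ncvg nrm u l
}.

(* cos z = sum_{n>=0} (-1)^n z^(2n) / (2n)! : the (norm-)limit of the
   partial sums (this series always converges in a Banach algebra; the
   limit is unique, so the choice below is the sum). *)
Definition cosA (R : realType) (A : comAlgType R[i]) (nrm : A -> R) (z : A) : A :=
  xget 0 [set s | ncvg nrm
     (series (fun n : nat => (((-1) ^+ n) / ((2 * n)`!)%:R : R[i]) *: z ^+ (2 * n))) s].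

Definition quasinilpotent (R : realType) (A : comAlgType R[i]) (nrm : A -> R) (x : A) : Prop :=
  (fun n : nat => powR (nrm (x ^+ n)) (n%:R^-1)) @ \oo --> (0 : R).

(* Main.v *)
Require Import Defs.
From HB Require Import structures.
From mathcomp Require Import all_boot all_order all_algebra.
From mathcomp Require Import all_classical all_reals all_analysis.
From mathcomp Require Import complex.
From mathcomp Require Import ring lra.
Import Order.TTheory GRing.Theory Num.Theory.
Import numFieldNormedType.Exports.
Local Open Scope ring_scope.
Local Open Scope classical_set_scope.
Section CmodFacts.
Variable R : realType.
Implicit Types a b : R[i].

Lemma cmod_ge0 a : 0 <= cmod a.
Proof. by case: a => x y; rewrite /cmod /Normc.normc sqrtr_ge0. Qed.

Lemma cmodM a b : cmod (a * b) = cmod a * cmod b.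
Proof. exact: Normc.normcM. Qed.

Lemma cmodD a b : cmod (a + b) <= cmod a + cmod b.
Proof. exact: le_normcD. Qed.

Lemma cmodN a : cmod (- a) = cmod a.
Proof. exact: normcN. Qed.

Lemma cmod_real (r : R) : cmod (r%:C)%C = `|r|.
Proof. by rewrite /cmod /Normc.normc /= expr0n /= addr0 sqrtr_sqr. Qed.

Lemma cmod0 : cmod (0 : R[i]) = 0.
Proof. exact: Normc.normc0. Qed.

Lemma cmod1 : cmod (1 : R[i]) = 1.
Proof. exact: Normc.normc1. Qed.

Lemma cmodV a : cmod a^-1 = (cmod a)^-1.
Proof. exact: Normc.normcV. Qed.

Lemma cmod_nat n : cmod (n%:R : R[i]) = n%:R.
Proof.
have -> : (n%:R : R[i]) = ((n%:R : R)%:C)%C by rewrite rmorph_nat.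
by rewrite cmod_real normr_nat.
Qed.

Lemma cmod_i : cmod ('i%C : R[i]) = 1.
Proof. by rewrite /cmod /Normc.normc /= expr0n expr1n add0r sqrtr1. Qed.

Lemma cmod_le_ReIm (x y : R) : cmod (x +i* y)%C <= `|x| + `|y|.
Proof.
rewrite /cmod /Normc.normc.
have h0 : 0 <= `|x| + `|y| by rewrite addr_ge0.
rewrite -[X in _ <= X](ger0_norm h0) -sqrtr_sqr ler_sqrt ?sqr_ge0 //.
rewrite sqrrD -[x ^+ 2]real_normK ?num_real // -[y ^+ 2]real_normK ?num_real //.
by rewrite -addrA lerD2l lerDr mulrn_wge0 // mulr_ge0.
Qed.

End CmodFacts.


Lemma eqle (T : realDomainType) (x y : T) : x = y -> x <= y.
Proof. by move->. Qed.

Lemma cmod_ReIm (R : realType) (w : R[i]) :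
  cmod w <= `|complex.Re w| + `|complex.Im w|.
Proof. by case: w => x y; apply: cmod_le_ReIm. Qed.

Lemma cos_cvg (R : realType) (r : R) : series (cos_coeff r) @ \oo --> cos r.
Proof. rewrite unlock; apply/cvgP; exact: is_cvg_series_cos_coeff. Qed.

Lemma sin_cvg (R : realType) (r : R) : series (sin_coeff r) @ \oo --> sin r.
Proof. rewrite unlock; apply/cvgP; exact: is_cvg_series_sin_coeff. Qed.

Lemma exp_cvg (R : realType) (r : R) : series (exp_coeff r) @ \oo --> expR r.
Proof. apply/cvgP; exact: is_cvg_series_exp_coeff. Qed.

Lemma by_parity (P : nat -> Prop) :
  (forall m, P m.*2) -> (forall m, P m.*2.+1) -> forall k, P k.
Proof.
move=> he ho k; rewrite -(odd_double_half k); case: (odd k) => /=.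
  by rewrite add1n; exact: ho.
by rewrite add0n; exact: he.
Qed.

Lemma i_pow_even (R : realType) m : ('i%C : R[i]) ^+ m.*2 = (((-1) ^+ m : R)%:C)%C.
Proof. by rewrite -mul2n exprM sqr_i rmorphXn rmorphN1. Qed.

Lemma i_pow_odd (R : realType) m :
  ('i%C : R[i]) ^+ m.*2.+1 = 'i%C * (((-1) ^+ m : R)%:C)%C.
Proof. by rewrite exprS i_pow_even. Qed.

Lemma iterm (R : realType) (r : R) k :
  (k`!%:R^-1 : R[i]) * ('i%C * (r%:C)%C) ^+ k =
  ((cos_coeff r k)%:C)%C + 'i%C * ((sin_coeff r k)%:C)%C.
Proof.
elim/by_parity: k => m.
  rewrite -cos_coeff'E sin_coeff_even rmorph0 mulr0 addr0 /cos_coeff'.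
  rewrite exprMn i_pow_even !rmorphM !rmorphXn fmorphV rmorph_nat rmorphN1.
  by ring.
rewrite cos_coeff_odd rmorph0 add0r -(sin_coeff'E r m) /sin_coeff'.
rewrite exprMn i_pow_odd !rmorphM !rmorphXn fmorphV rmorph_nat rmorphN1.
by ring.
Qed.

Lemma cRe_sub (R : realType) (w1 w2 : R[i]) :
  complex.Re (w1 - w2) = complex.Re w1 - complex.Re w2.
Proof. by case: w1 => a b; case: w2 => c d. Qed.

Lemma cIm_sub (R : realType) (w1 w2 : R[i]) :
  complex.Im (w1 - w2) = complex.Im w1 - complex.Im w2.
Proof. by case: w1 => a b; case: w2 => c d. Qed.

Lemma le_term_sum (R : realType) (F : nat -> R) n i :
  (forall k, 0 <= F k) -> (i < n)%N -> F i <= \sum_(0 <= k < n) F k.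
Proof.
move=> h lt; rewrite (big_cat_nat (leq0n i) (ltnW lt)) /= [\sum_(i <= k < n) F k]big_ltn //.
rewrite addrCA lerDl addr_ge0 //; apply: sumr_ge0 => k _; exact: h.
Qed.

Lemma expr_le (R : realType) (b c : R) k : 0 <= b -> b <= c -> b ^+ k <= c ^+ k.
Proof.
move=> b0 bc; elim: k => [|k ih]; first by rewrite !expr0.
by rewrite !exprS; apply: ler_pM => //; rewrite exprn_ge0.
Qed.

Lemma tri_sum (V : zmodType) (g : nat -> nat -> V) N :
  \sum_(0 <= n < N) \sum_(0 <= i < n.+1) g i (n - i)%N =
  \sum_(0 <= i < N) \sum_(0 <= j < (N - i)%N) g i j.
Proof.
elim: N => [|N ih]; first by rewrite !big_geq.
rewrite big_nat_recr //= ih [in RHS]big_nat_recr //= subSnn big_nat1.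
rewrite [\sum_(0 <= i < N.+1) g i (N - i)%N]big_nat_recr //= subnn.
have e : \sum_(0 <= i < N) \sum_(0 <= j < (N.+1 - i)%N) g i j =
    \sum_(0 <= i < N) \sum_(0 <= j < (N - i)%N) g i j +
    \sum_(0 <= i < N) g i (N - i)%N.
  rewrite -big_split; apply: eq_big_nat => i /andP[_ iN] /=.
  by rewrite subSn ?(ltnW iN) // big_nat_recr.
by rewrite e !addrA.
Qed.

Lemma sq_split (V : zmodType) (g : nat -> nat -> V) N :
  \sum_(0 <= i < N) \sum_(0 <= j < N) g i j =
  \sum_(0 <= i < N) \sum_(0 <= j < (N - i)%N) g i j +
  \sum_(0 <= i < N) \sum_((N - i)%N <= j < N) g i j.
Proof.
rewrite -big_split /=; apply: eq_bigr => i _.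
by rewrite -big_cat_nat // leq_subr.
Qed.

Lemma fact_coef (F : numFieldType) n i : (i <= n)%N ->
  (n`!%:R^-1 : F) * 'C(n, i)%:R = i`!%:R^-1 * (n - i)%N`!%:R^-1.
Proof.
move=> ni; rewrite -(bin_fact ni) !natrM.
have h1 : ('C(n, i)%:R : F) != 0 by rewrite pnatr_eq0 -lt0n bin_gt0.
have h2 : (i`!%:R : F) != 0 by rewrite pnatr_eq0 -lt0n fact_gt0.
have h3 : ((n - i)%N`!%:R : F) != 0 by rewrite pnatr_eq0 -lt0n fact_gt0.
by field; rewrite h1 h2 h3.
Qed.

Lemma exp_prod_id (F : numFieldType) (B : comAlgType F) (a b : B) N :
  series (fun k => (k`!%:R^-1 : F) *: b ^+ k) N *
  series (fun k => (k`!%:R^-1 : F) *: a ^+ k) N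
  - series (fun k => (k`!%:R^-1 : F) *: (a + b) ^+ k) N
  = \sum_(0 <= i < N) \sum_((N - i)%N <= j < N)
      ((i`!%:R^-1 * j`!%:R^-1 : F) *: (a ^+ j * b ^+ i)).
Proof.
pose g i j := ((i`!%:R^-1 * j`!%:R^-1 : F) *: (a ^+ j * b ^+ i)).
have hsq : series (fun k => (k`!%:R^-1 : F) *: b ^+ k) N *
  series (fun k => (k`!%:R^-1 : F) *: a ^+ k) N =
  \sum_(0 <= i < N) \sum_(0 <= j < N) g i j.
  rewrite /series /= mulr_suml; apply: eq_bigr => i _.
  rewrite mulr_sumr; apply: eq_bigr => j _.
  by rewrite /g -scalerAl -scalerAr scalerA mulrC [b ^+ i * _]mulrC.
have htri : series (fun k => (k`!%:R^-1 : F) *: (a + b) ^+ k) N =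
  \sum_(0 <= n < N) \sum_(0 <= i < n.+1) g i (n - i)%N.
  rewrite /series /=; apply: eq_bigr => n _.
  rewrite exprDn scaler_sumr big_mkord; apply: eq_bigr => i _.
  rewrite -[_ *+ 'C(n, i)]scaler_nat scalerA fact_coef; last by rewrite -ltnS.
  by [].
by rewrite hsq htri tri_sum sq_split addrC addKr.
Qed.

Section Trig.
Variable R : realType.

Lemma sin_pi_int (k : int) : sin (pi * k%:~R) = 0 :> R.
Proof.
have hn n : sin (pi * n%:R) = 0 :> R.
  by rewrite mulr_natr -[pi *+ n]add0r (alternatingn (@sinDpi R)) sin0 mulr0.
case: k => n; first by rewrite hn.
by rewrite NegzE mulrNz mulrN sinN -pmulrn hn oppr0.
Qed.

Lemma sin_eq0_int_pos (a : R) : 0 <= a -> sin a = 0 -> exists m : nat, a = pi * m%:R.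
Proof.
move=> a0 sa.
have pi0 : 0 < pi :> R := pi_gt0 R.
pose m := Num.Def.trunc (a / pi).
have /andP[h1 h2] : m%:R <= a / pi < m.+1%:R by apply: truncn_itv; rewrite divr_ge0 // ltW.
exists m.
pose s := a - pi *+ m.
have hs : sin s = 0.
  have := alternatingn (@sinDpi R) m s; rewrite /s subrK sa => /esym/eqP.
  by rewrite mulf_eq0 signr_eq0 /= => /eqP.
have e1 : m%:R * pi <= a by rewrite -ler_pdivlMr.
have e2 : a < m.+1%:R * pi by rewrite -ltr_pdivrMr.
have e3 : m.+1%:R * pi = pi *+ m + pi :> R by rewrite mulr_natl mulrSr.
have e4 : m%:R * pi = pi *+ m :> R by rewrite mulr_natl.
have s0 : 0 <= s by rewrite /s; lra.
have spi : s < pi by rewrite /s; lra.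
have : s = 0.
  apply/eqP; rewrite eq_le s0 andbT leNgt; apply/negP => sp.
  by have := sin_gt0_pi (andb_true_intro (conj sp spi)); rewrite hs ltxx.
move=> h0; rewrite mulr_natr; apply/eqP; rewrite -subr_eq0; apply/eqP; exact: h0.
Qed.

Lemma sin_eq0_int (a : R) : sin a = 0 -> exists k : int, a = pi * k%:~R.
Proof.
move=> sa; case: (leP 0 a) => a0.
  by have [m ->] := @sin_eq0_int_pos a a0 sa; exists m%:Z.
have na0 : 0 <= - a by rewrite oppr_ge0 ltW.
have sna : sin (- a) = 0 by rewrite sinN sa oppr0.
have [m hm] := @sin_eq0_int_pos (- a) na0 sna.
exists (- m%:Z); rewrite mulrNz mulrN -hm opprK.
by [].
Qed.

Lemma scal_c (r c s : R) : ((r%:C)%C * (c +i* s)%C) = ((r * c) +i* (r * s))%C.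
Proof. by simpc. Qed.

End Trig.

Section Trig2.
Variable R : realType.

Lemma omega_eq (a b : R) :
  ((expR (-b) * cos a) +i* (expR (-b) * sin a))%C =
  ((expR b * cos a) +i* (- (expR b * sin a)))%C -> sin a = 0 /\ b = 0.
Proof.
case=> hre him.
have E1 := expR_gt0 (- b); have E2 := expR_gt0 b.
have sa : sin a = 0.
  have : (expR (- b) + expR b) * sin a = 0 by rewrite mulrDl him; ring.
  by move/eqP; rewrite mulf_eq0 => /orP[/eqP h|/eqP //]; move: h; lra.
split => //.
have ca : cos a != 0.
  apply/negP => /eqP c0; have := cos2Dsin2 a; rewrite c0 sa expr0n /= addr0.
  by move/eqP; rewrite eq_sym oner_eq0.
have : expR (- b) = expR b.
  by apply: (mulIf ca); rewrite hre.
move/expR_inj => h; lra.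
Qed.

Lemma omega_neq0 (E a : R) : 0 < E -> ((E * cos a) +i* (E * sin a))%C != 0.
Proof.
move=> E0; apply/negP => /eqP [] /eqP; rewrite mulf_eq0 (gt_eqF E0) /= => /eqP c0.
move/eqP; rewrite mulf_eq0 (gt_eqF E0) /= => /eqP s0.
by have := cos2Dsin2 a; rewrite c0 s0 expr0n /= addr0 => /eqP; rewrite eq_sym oner_eq0.
Qed.

End Trig2.
Section Ban.
Variables (R : realType) (A : comAlgType R[i]) (nrm : A -> R).
Hypothesis hA : banach_algebra_norm nrm.

Lemma nrmZ (a : R[i]) x : nrm (a *: x) = cmod a * nrm x.
Proof. exact: (ban_scale hA a x). Qed.

Lemma nrm0 : nrm 0 = 0.
Proof. by rewrite -(scale0r (0 : A)) nrmZ cmod0 mul0r. Qed.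

Lemma nrmN x : nrm (- x) = nrm x.
Proof. by rewrite -scaleN1r nrmZ cmodN cmod1 mul1r. Qed.

Lemma nrmD x y : nrm (x + y) <= nrm x + nrm y.
Proof. exact: (ban_triangle hA x y). Qed.

Lemma nrmM x y : nrm (x * y) <= nrm x * nrm y.
Proof. exact: (ban_submult hA x y). Qed.

Lemma nrm_ge0 x : 0 <= nrm x.
Proof.
have := nrmD x (- x); rewrite subrr nrm0 nrmN => h.
by rewrite -(@pmulr_rge0 _ 2) // mulr2n mulrDl mul1r.
Qed.

Lemma nrm_eq0 x : nrm x = 0 -> x = 0.
Proof. exact: (@ban_eq0 R A nrm hA x). Qed.

Lemma nrmB x y : nrm (x - y) = nrm (y - x).
Proof. by rewrite -nrmN opprB. Qed.

Lemma nrm_sum (I : Type) (r : seq I) (P : pred I) (F : I -> A) :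
  nrm (\sum_(i <- r | P i) F i) <= \sum_(i <- r | P i) nrm (F i).
Proof.
elim/big_ind2: _ => //; first by rewrite nrm0.
by move=> a b c d h1 h2; apply: le_trans (nrmD _ _) (lerD h1 h2).
Qed.

Lemma nrmMn x n : nrm (x *+ n) <= nrm x *+ n.
Proof.
elim: n => [|n ih]; first by rewrite !mulr0n nrm0.
by rewrite !mulrS; apply: le_trans (nrmD _ _) (lerD _ ih).
Qed.

Lemma nrmX x n : nrm (x ^+ n) <= nrm 1 * nrm x ^+ n.
Proof.
elim: n => [|n ih]; first by rewrite !expr0 mulr1.
rewrite exprSr; apply: le_trans (nrmM _ _) _.
rewrite exprSr mulrA; apply: ler_wpM2r => //; exact: nrm_ge0.
Qed.

Definition cvA (u : nat -> A) (l : A) :=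
  forall e : R, 0 < e -> exists N, forall n, (N <= n)%N -> nrm (u n - l) < e.

Lemma cvR_epsN (u : nat -> R) l : u @ \oo --> l ->
  forall e : R, 0 < e -> exists N, forall n, (N <= n)%N -> `|u n - l| < e.
Proof.
move=> /cvgrPdist_lt H e e0; have [N _ HN] := H e e0.
by exists N => n Nn; rewrite distrC; exact: HN.
Qed.

Lemma epsN_cvR (u : nat -> R) l :
  (forall e : R, 0 < e -> exists N, forall n, (N <= n)%N -> `|u n - l| < e) ->
  u @ \oo --> l.
Proof.
move=> H; apply/cvgrPdist_lt => e e0; have [N HN] := H e e0.
by exists N => // n /= Nn; rewrite distrC; exact: HN.
Qed.

Lemma ncvgE u l : ncvg nrm u l <-> cvA u l.
Proof.
split.
  move=> /cvR_epsN H e e0; have [N HN] := H e e0; exists N => n /HN.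
  by rewrite subr0 ger0_norm ?nrm_ge0.
move=> H; apply: epsN_cvR => e e0; have [N HN] := H e e0; exists N => n /HN.
by rewrite subr0 ger0_norm ?nrm_ge0.
Qed.



Lemma cvA_le (u : nat -> A) l (f : nat -> R) :
  f @ \oo --> 0 -> (forall n, nrm (u n - l) <= f n) -> cvA u l.
Proof.
move=> /cvR_epsN H hf e e0; have [N HN] := H e e0; exists N => n /HN.
by rewrite subr0 => h; apply: le_lt_trans (hf n) (le_lt_trans (ler_norm _) h).
Qed.

Lemma cvA_nrm (u : nat -> A) l : cvA u l -> (fun n => nrm (u n - l)) @ \oo --> 0.
Proof. by move/ncvgE. Qed.

Lemma cvA_unique u l1 l2 : cvA u l1 -> cvA u l2 -> l1 = l2.
Proof.
move=> h1 h2; apply/eqP; rewrite -subr_eq0; apply/eqP/nrm_eq0.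
apply/eqP; rewrite eq_le nrm_ge0 andbT; apply/negPn/negP; rewrite -ltNge => c0.
have e0 : 0 < nrm (l1 - l2) / 2 by rewrite divr_gt0.
have [N1 H1] := h1 _ e0; have [N2 H2] := h2 _ e0.
have := H1 (maxn N1 N2) (leq_maxl _ _); have := H2 (maxn N1 N2) (leq_maxr _ _).
set v := u _ => a b.
have : nrm (l1 - l2) < nrm (l1 - l2) / 2 + nrm (l1 - l2) / 2.
  have t : nrm (l1 - l2) <= nrm (l1 - v) + nrm (v - l2).
    have -> : l1 - l2 = (l1 - v) + (v - l2) by rewrite addrA subrK.
    exact: nrmD.
  by apply: le_lt_trans t _; rewrite nrmB ltrD.
by rewrite -splitr ltxx.
Qed.

Lemma cvA_sub (u : nat -> A) l (f : nat -> nat) :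
  (forall n, (n <= f n)%N) -> cvA u l -> cvA (fun n => u (f n)) l.
Proof.
move=> hf h e e0; have [N HN] := h e e0; exists N => n Nn.
by apply: HN; apply: leq_trans Nn (hf n).
Qed.

Lemma cvA_mul u v l m : cvA u l -> cvA v m ->
  cvA (fun n => u n * v n) (l * m).
Proof.
move=> hu hv.
pose f n := nrm (u n - l); pose g n := nrm (v n - m).
apply: (@cvA_le _ _ (fun n => f n * g n + f n * nrm m + nrm l * g n)).
  rewrite -[0 : R](addr0 0) -{1}[0 : R](addr0 0).
  have cf : f @ \oo --> 0 by apply: cvA_nrm.
  have cg : g @ \oo --> 0 by apply: cvA_nrm.
  apply: cvgD; first apply: cvgD.
  - by rewrite -[0 : R](mulr0 0); apply: cvgM.
  - by rewrite -[0 : R](mul0r (nrm m)); apply: cvgMl.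
  - by rewrite -[0 : R](mulr0 (nrm l)); apply: cvgMr.
move=> n.
have -> : u n * v n - l * m =
  (u n - l) * (v n - m) + (u n - l) * m + l * (v n - m).
  by ring.
apply: le_trans (nrmD _ _) _; apply: lerD; last exact: nrmM.
apply: le_trans (nrmD _ _) _; apply: lerD; exact: nrmM.
Qed.

Lemma cvA_cst l : cvA (fun _ => l) l.
Proof. by move=> e e0; exists 0%N => n _; rewrite subrr nrm0. Qed.

Lemma cvA_add u v l m : cvA u l -> cvA v m ->
  cvA (fun n => u n + v n) (l + m).
Proof.
move=> hu hv.
apply: (@cvA_le _ _ (fun n => nrm (u n - l) + nrm (v n - m))).
  by rewrite -[0 : R](addr0 0); apply: cvgD; apply: cvA_nrm.
move=> n; have -> : u n + v n - (l + m) = (u n - l) + (v n - m) by ring.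
exact: nrmD.
Qed.

Lemma cvA_scale (c : R[i]) u l : cvA u l -> cvA (fun n => c *: u n) (c *: l).
Proof.
move=> hu; apply: (@cvA_le _ _ (fun n => cmod c * nrm (u n - l))).
  by rewrite -[0 : R](mulr0 (cmod c)); apply: cvgMr; apply: cvA_nrm.
by move=> n; rewrite -scalerBr nrmZ.
Qed.

Lemma series_dom_cvg (t : nat -> A) (M a : R) :
  (forall k, nrm (t k) <= M * exp_coeff a k) -> exists l, cvA (series t) l.
Proof.
move=> ht.
suff : ncauchy nrm (series t).
  by move/(ban_complete hA) => [l /ncvgE hl]; exists l.
have /cvg_ex [L hL] := is_cvg_series_exp_coeff a.
move=> e e0.
have e1 : 0 < e / (2 * (`|M| + 1)) by rewrite divr_gt0 // mulr_gt0 // ltr_wpDl.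
have [N HN] := @cvR_epsN _ _ hL _ e1.
exists N.
suff key : forall m n, (N <= n)%N -> (n <= m)%N ->
    nrm (series t m - series t n) < e.
  move=> m n Nm Nn; have [nm|mn] := leqP n m; first exact: key.
  by rewrite nrmB; apply: key => //; apply: ltnW.
move=> m n Nn nm.
rewrite sub_series_geq //.
apply: le_lt_trans (nrm_sum _ _ _ _) _.
apply: le_lt_trans (_ : _ <= \sum_(n <= k < m) M * exp_coeff a k) _.
  exact: ler_sum.
rewrite -mulr_sumr -sub_series_geq //.
apply: le_lt_trans (ler_norm _) _; rewrite normrM.
have h2 : `|series (exp_coeff a) m - series (exp_coeff a) n| < e / (`|M| + 1).
  apply: le_lt_trans (_ : _ <= `|series (exp_coeff a) m - L| +
                              `|series (exp_coeff a) n - L|) _.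
    set sm := series _ m; set sn := series _ n.
    have -> : sm - sn = (sm - L) - (sn - L) by rewrite opprB addrA subrK.
    exact: ler_normB.
  have -> : e / (`|M| + 1) = e / (2 * (`|M| + 1)) + e / (2 * (`|M| + 1)).
    by field; rewrite lt0r_neq0 // ltr_wpDl.
  by apply: ltrD; apply: HN => //; apply: leq_trans Nn nm.
apply: le_lt_trans (_ : `|M| * `|series (exp_coeff a) m - series (exp_coeff a) n|
    <= (`|M| + 1) * `|series (exp_coeff a) m - series (exp_coeff a) n|) _.
  by apply: ler_wpM2r => //; rewrite lerDl.
by rewrite -ltr_pdivlMl ?ltr_wpDl // mulrC.
Qed.

Definition eterm (z : A) (k : nat) : A := ((k`!%:R)^-1 : R[i]) *: z ^+ k.
Definition Eexp (z : A) : A := xget 0 [set l | cvA (series (eterm z)) l].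

Lemma cmod_factV k : cmod ((k`!%:R)^-1 : R[i]) = (k`!%:R)^-1.
Proof. by rewrite cmodV cmod_nat. Qed.

Lemma eterm_bound z k : nrm (eterm z k) <= nrm 1 * exp_coeff (nrm z) k.
Proof.
rewrite /eterm nrmZ cmod_factV /exp_coeff /=.
apply: le_trans (ler_wpM2l _ (nrmX z k)) _; first by rewrite invr_ge0 ler0n.
by apply: eqle; ring.
Qed.

Lemma Eexp_cvg z : cvA (series (eterm z)) (Eexp z).
Proof.
rewrite /Eexp; apply: (@xgetPex _ 0 [set l | cvA (series (eterm z)) l]).
by have [l hl] := @series_dom_cvg _ _ _ (eterm_bound z); exists l.
Qed.

Lemma Eexp_unique z l : cvA (series (eterm z)) l -> Eexp z = l.
Proof. by move=> h; apply: cvA_unique (Eexp_cvg z) h. Qed.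

Lemma Eexp0 : Eexp 0 = 1.
Proof.
apply: Eexp_unique.
have hs n : series (eterm 0) n.+1 = 1.
  elim: n => [|n ih]; first by rewrite seriesSr /series /= big_geq // add0r /eterm expr0 fact0 invr1 scale1r.
  by rewrite seriesSr ih /eterm expr0n /= scaler0 addr0.
move=> e e0; exists 1%N => n; case: n => // n _.
by rewrite hs subrr nrm0.
Qed.

Lemma EexpD a b : Eexp (a + b) = Eexp a * Eexp b.
Proof.
apply: Eexp_unique.
pose al := nrm a; pose be := nrm b.
pose RR N := series (exp_coeff be) N * series (exp_coeff al) N
             - series (exp_coeff (al + be)) N.
have hRR : RR @ \oo --> 0.
  have -> : (0 : R) = expR be * expR al - expR (al + be).
    by rewrite expRD mulrC subrr.
  apply: cvgB; first apply: cvgM.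
  - by apply/cvgP; exact: is_cvg_series_exp_coeff.
  - by apply/cvgP; exact: is_cvg_series_exp_coeff.
  - by apply/cvgP; exact: is_cvg_series_exp_coeff.
have ec x : exp_coeff x = (fun k => (k`!%:R^-1 : R) *: (x : R^o) ^+ k).
  by apply/funext => k; rewrite /exp_coeff /= mulrC.
have hidR N : RR N = \sum_(0 <= i < N) \sum_((N - i)%N <= j < N)
      ((i`!%:R^-1 * j`!%:R^-1 : R) * (al ^+ j * be ^+ i)).
  by rewrite /RR !ec; exact: (@exp_prod_id _ _ (al : R^o) be N).
have hid N : series (eterm b) N * series (eterm a) N - series (eterm (a + b)) N
   = \sum_(0 <= i < N) \sum_((N - i)%N <= j < N)
      ((i`!%:R^-1 * j`!%:R^-1 : R[i]) *: (a ^+ j * b ^+ i)).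
  exact: exp_prod_id.
have hb N : nrm (series (eterm b) N * series (eterm a) N
                 - series (eterm (a + b)) N) <= nrm 1 ^+ 2 * RR N.
  rewrite hid hidR mulr_sumr; apply: le_trans (nrm_sum _ _ _ _) _.
  apply: ler_sum => i _; rewrite mulr_sumr.
  apply: le_trans (nrm_sum _ _ _ _) _; apply: ler_sum => j _.
  rewrite nrmZ cmodM !cmod_factV.
  apply: le_trans (ler_wpM2l _ (nrmM _ _)) _.
    by rewrite mulr_ge0 // invr_ge0 ler0n.
  apply: le_trans (ler_wpM2l _ (ler_pM (nrm_ge0 _) (nrm_ge0 _) (nrmX a j) (nrmX b i))) _.
    by rewrite mulr_ge0 // invr_ge0 ler0n.
  by apply: eqle; rewrite /al /be; ring.
pose P N := series (eterm b) N * series (eterm a) N.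
have hP : cvA P (Eexp b * Eexp a) by apply: cvA_mul; apply: Eexp_cvg.
apply: (@cvA_le _ _ (fun N => nrm (P N - Eexp b * Eexp a) + nrm 1 ^+ 2 * RR N)).
  rewrite -[0 : R](addr0 0); apply: cvgD; first exact: cvA_nrm.
  by rewrite -[0 : R](mulr0 (nrm 1 ^+ 2)); apply: cvgMr.
move=> N; rewrite mulrC.
have -> : series (eterm (a + b)) N - Eexp b * Eexp a =
  (P N - Eexp b * Eexp a) - (P N - series (eterm (a + b)) N).
  by ring.
apply: le_trans (nrmD _ _) _; rewrite nrmN; apply: lerD => //; exact: hb.
Qed.

Lemma cvA_ext (u v : nat -> A) l : (forall n, u n = v n) -> cvA v l -> cvA u l.
Proof. by move=> h hv e e0; have [N HN] := hv e e0; exists N => n /HN; rewrite h. Qed.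

Lemma cvA_scal (s : nat -> R[i]) (t : R[i]) :
  (fun n => complex.Re (s n)) @ \oo --> complex.Re t ->
  (fun n => complex.Im (s n)) @ \oo --> complex.Im t ->
  cvA (fun n => s n *: 1) (t *: 1).
Proof.
move=> hre him e e0.
have n1 : 0 < nrm 1 + 1 by rewrite ltr_wpDl // nrm_ge0.
have e1 : 0 < e / (2 * (nrm 1 + 1)) by rewrite divr_gt0 // mulr_gt0.
have [N1 H1] := @cvR_epsN _ _ hre _ e1.
have [N2 H2] := @cvR_epsN _ _ him _ e1.
exists (maxn N1 N2) => n hn.
rewrite -scalerBl nrmZ.
have hc : cmod (s n - t) < e / (nrm 1 + 1).
  apply: le_lt_trans (cmod_ReIm _ _) _.
  rewrite cRe_sub cIm_sub.
  have -> : e / (nrm 1 + 1) = e / (2 * (nrm 1 + 1)) + e / (2 * (nrm 1 + 1)).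
    by field; rewrite lt0r_neq0.
  apply: ltrD; [apply: H1 | apply: H2].
    exact: leq_trans (leq_maxl _ _) hn.
  exact: leq_trans (leq_maxr _ _) hn.
apply: le_lt_trans (_ : cmod (s n - t) * nrm 1 <= cmod (s n - t) * (nrm 1 + 1)) _.
  by apply: ler_wpM2l; [exact: cmod_ge0 | rewrite lerDl].
by rewrite -ltr_pdivlMr.
Qed.

Lemma series_eterm_scal (c : R[i]) n :
  series (eterm (c *: 1)) n = (\sum_(0 <= k < n) (k`!%:R^-1 * c ^+ k)) *: 1.
Proof.
rewrite /series /= scaler_suml; apply: eq_bigr => k _.
by rewrite /eterm exprZn expr1n scalerA.
Qed.

Lemma Eexp_real (r : R) : Eexp ((r%:C)%C *: 1) = ((expR r)%:C)%C *: 1.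
Proof.
apply: Eexp_unique.
apply: (@cvA_ext _ (fun n => ((series (exp_coeff r) n)%:C)%C *: 1)).
  move=> n; rewrite series_eterm_scal /series /= rmorph_sum; congr (_ *: _).
  apply: eq_bigr => k _.
  by rewrite /exp_coeff /= rmorphM rmorphXn fmorphV rmorph_nat mulrC.
apply: cvA_scal => /=; first exact: exp_cvg.
exact: cvg_cst.
Qed.

Lemma Eexp_imag (r : R) : Eexp (('i%C * (r%:C)%C) *: 1) = (cos r +i* sin r)%C *: 1.
Proof.
apply: Eexp_unique.
apply: (@cvA_ext _ (fun n => (((series (cos_coeff r) n)%:C)%C +
           'i%C * ((series (sin_coeff r) n)%:C)%C) *: 1)).
  move=> n; rewrite series_eterm_scal; congr (_ *: _).
  rewrite /series /= !rmorph_sum mulr_sumr -big_split /=.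
  by apply: eq_bigr => k _; rewrite iterm.
apply: cvA_scal.
  have -> : (fun n => complex.Re (((series (cos_coeff r) n)%:C)%C +
           'i%C * ((series (sin_coeff r) n)%:C)%C : R[i])) = series (cos_coeff r).
    by apply/funext => n; simpc.
  exact: cos_cvg.
have -> : (fun n => complex.Im (((series (cos_coeff r) n)%:C)%C +
         'i%C * ((series (sin_coeff r) n)%:C)%C : R[i])) = series (sin_coeff r).
  by apply/funext => n; simpc.
exact: sin_cvg.
Qed.

Lemma Eexp_scal (x y : R) :
  Eexp ((x +i* y)%C *: 1) = (((expR x)%:C)%C * (cos y +i* sin y)%C) *: 1.
Proof.
have -> : (x +i* y)%C = (x%:C)%C + 'i%C * (y%:C)%C by simpc.
by rewrite scalerDl EexpD Eexp_real Eexp_imag -scalerAl mul1r scalerA.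
Qed.

(* E z = 1 + z + z^2 w *)
Definition tterm (z : A) (k : nat) : A := ((k.+2`!%:R)^-1 : R[i]) *: z ^+ k.

Lemma tterm_bound z k : nrm (tterm z k) <= nrm 1 * exp_coeff (nrm z) k.
Proof.
apply: le_trans (eterm_bound z k); rewrite /tterm /eterm !nrmZ !cmod_factV.
apply: ler_wpM2r; first exact: nrm_ge0.
rewrite lef_pV2 ?posrE ?ltr0n ?fact_gt0 // ler_nat.
by apply: leq_fact; apply: leq_trans (leqnSn _) (leqnSn _).
Qed.

Lemma series_eterm2 z N :
  series (eterm z) N.+2 = 1 + z + z ^+ 2 * series (tterm z) N.
Proof.
elim: N => [|N ih].
  rewrite seriesSr seriesSr /series /= !big_geq // add0r mulr0 addr0.
  by rewrite /eterm expr0 expr1 fact0 invr1 !scale1r.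
rewrite seriesSr ih seriesSr mulrDr addrA; congr (_ + _).
by rewrite /eterm /tterm -scalerAr -exprD add2n.
Qed.

Lemma Eexp_quad z : exists w, Eexp z = 1 + z + z ^+ 2 * w.
Proof.
have [w hw] := @series_dom_cvg _ _ _ (tterm_bound z).
exists w.
apply: (@cvA_unique (fun N => series (eterm z) N.+2)).
  apply: (@cvA_sub _ _ (fun n => n.+2)); last exact: Eexp_cvg.
  by move=> n; rewrite leqW.
apply: (@cvA_ext _ (fun N => 1 + z + z ^+ 2 * series (tterm z) N)).
  exact: series_eterm2.
by apply: cvA_add; [exact: cvA_cst | apply: cvA_mul => //; exact: cvA_cst].
Qed.

Definition ct (z : A) (n : nat) : A :=
  (((-1) ^+ n) / ((2 * n)`!)%:R : R[i]) *: z ^+ (2 * n).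

Lemma exprN_even (T : pzRingType) (x : T) N : (- x) ^+ N.*2 = x ^+ N.*2.
Proof. by rewrite -mul2n !exprM sqrrN. Qed.

Lemma eterm_scal (c : R[i]) z k :
  eterm (c *: z) k = (k`!%:R^-1 * c ^+ k) *: z ^+ k.
Proof. by rewrite /eterm exprZn scalerA. Qed.

Lemma series_ct z N :
  series (ct z) N = 2^-1 *: (series (eterm ('i%C *: z)) N.*2 +
                             series (eterm (- ('i%C *: z))) N.*2).
Proof.
elim: N => [|N ih].
  by rewrite /series /= !big_geq // addr0 scaler0.
rewrite seriesSr ih doubleS !seriesSr -!scaleNr !eterm_scal.
set S1 := series _ _; set S2 := series _ _.
have ka : ((N.*2)`!%:R^-1 * 'i%C ^+ N.*2) *: z ^+ N.*2 +
          ((N.*2)`!%:R^-1 * (- 'i%C) ^+ N.*2) *: z ^+ N.*2 = 2 *: ct z N.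
  rewrite /ct mul2n scalerA -scalerDl exprN_even i_pow_even rmorphXn rmorphN1.
  by congr (_ *: _); ring.
have kb : ((N.*2.+1)`!%:R^-1 * 'i%C ^+ N.*2.+1) *: z ^+ N.*2.+1 +
          ((N.*2.+1)`!%:R^-1 * (- 'i%C) ^+ N.*2.+1) *: z ^+ N.*2.+1 = 0.
  rewrite -scalerDl !exprS exprN_even.
  have -> : (N.*2.+1)`!%:R^-1 * ('i%C * 'i%C ^+ N.*2) +
      (N.*2.+1)`!%:R^-1 * (- 'i%C * 'i%C ^+ N.*2) = 0 :> R[i] by ring.
  by rewrite scale0r.
set a := (_ *: z ^+ N.*2); set b := (_ *: z ^+ N.*2).
set c := (_ *: z ^+ N.*2.+1); set d := (_ *: z ^+ N.*2.+1).
have -> : S1 + a + c + (S2 + b + d) = (S1 + S2) + (a + b) + (c + d) by ring.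
have h2 : (2 : R[i]) != 0 by rewrite pnatr_eq0.
by rewrite ka kb addr0 !scalerDr scalerA mulVf // scale1r.
Qed.

Lemma cosA_E z : cosA nrm z = 2^-1 *: (Eexp ('i%C *: z) + Eexp (- ('i%C *: z))).
Proof.
have hc : cvA (series (ct z)) (2^-1 *: (Eexp ('i%C *: z) + Eexp (- ('i%C *: z)))).
  apply: (@cvA_ext _ _ _ (series_ct z)); apply: cvA_scale; apply: cvA_add.
  - apply: (@cvA_sub _ _ (fun n => n.*2)); last exact: Eexp_cvg.
    by move=> n; rewrite -addnn leq_addr.
  - apply: (@cvA_sub _ _ (fun n => n.*2)); last exact: Eexp_cvg.
    by move=> n; rewrite -addnn leq_addr.
rewrite /cosA; apply: xget_unique; first by apply/ncvgE; exact: hc.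
by move=> y /= /ncvgE hy; apply: cvA_unique hy hc.
Qed.

Lemma qn_bound x (e : R) : quasinilpotent nrm x -> 0 < e ->
  exists C, 0 <= C /\ forall k, nrm (x ^+ k) <= C * e ^+ k.
Proof.
move=> qx e0; have [N HN] := @cvR_epsN _ _ qx _ e0.
pose F k := nrm (x ^+ k) / e ^+ k.
have F0 k : 0 <= F k by rewrite divr_ge0 ?nrm_ge0 ?exprn_ge0 // ltW.
exists (1 + \sum_(0 <= k < N.+1) F k); split.
  by rewrite addr_ge0 //; apply: sumr_ge0.
have ek k : 0 < e ^+ k by rewrite exprn_gt0.
move=> k; case: (ltnP k N.+1) => hk.
  have -> : nrm (x ^+ k) = F k * e ^+ k by rewrite /F divfK // lt0r_neq0.
  apply: ler_wpM2r; first exact: ltW.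
  by apply: le_trans (@le_term_sum _ F _ _ F0 hk) _; rewrite lerDr.
have hk1 : (0 < k)%N by apply: leq_trans hk.
have := HN k (ltnW hk); rewrite subr0.
set b := powR _ _ => hb.
have b0 : 0 <= b by rewrite /b powR_ge0.
have hr : nrm (x ^+ k) = b ^+ k.
  rewrite /b -powR_mulrn ?powR_ge0 // -powRrM mulVf ?powRr1 ?nrm_ge0 //.
  by rewrite pnatr_eq0 -lt0n.
rewrite hr; apply: le_trans (@expr_le _ _ _ k b0 (ltW (le_lt_trans (ler_norm _) hb))) _.
rewrite -[X in X <= _]mul1r; apply: ler_wpM2r; first by rewrite exprn_ge0 // ltW.
rewrite lerDl; apply: sumr_ge0 => ? _; exact: F0.
Qed.

Lemma key_lemma x y d a b : quasinilpotent nrm x -> quasinilpotent nrm y ->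
  d = d * (x * a + y * b) -> d = 0.
Proof.
move=> qx qy hd.
set z := x * a + y * b.
have hdn n : d = d * z ^+ n.
  elim: n => [|n ih]; first by rewrite expr0 mulr1.
  by rewrite exprSr mulrA -ih.
pose al := nrm a; pose be := nrm b.
have al0 : 0 <= al by apply: nrm_ge0.
have be0 : 0 <= be by apply: nrm_ge0.
have s0 : 0 < al + be + 1 by rewrite ltr_wpDl // addr_ge0.
pose e := (2 * (al + be + 1))^-1.
have e0 : 0 < e by rewrite invr_gt0 mulr_gt0.
have [Cx [Cx0 hx]] := @qn_bound _ _ qx e0.
have [Cy [Cy0 hy]] := @qn_bound _ _ qy e0.
pose K := Cx * Cy * nrm 1 ^+ 2.
have hbound n : nrm (z ^+ n) <= K * (e * al + e * be) ^+ n.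
  rewrite /z exprDn [in X in _ <= X]exprDn mulr_sumr.
  apply: le_trans (nrm_sum _ _ _ _) _; apply: ler_sum => i _.
  apply: le_trans (nrmMn _ _) _; rewrite !mulrnAr lerMn2r; apply/orP; right.
  rewrite !exprMn.
  have -> : x ^+ (n - i) * a ^+ (n - i) * (y ^+ i * b ^+ i) =
    (x ^+ (n - i) * y ^+ i) * (a ^+ (n - i) * b ^+ i) by ring.
  apply: le_trans (nrmM _ _) _.
  have h1 : nrm (x ^+ (n - i) * y ^+ i) <= Cx * e ^+ (n - i) * (Cy * e ^+ i).
    apply: le_trans (nrmM _ _) _.
    by apply: ler_pM; rewrite ?nrm_ge0.
  have h2 : nrm (a ^+ (n - i) * b ^+ i) <=
      nrm 1 * al ^+ (n - i) * (nrm 1 * be ^+ i).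
    apply: le_trans (nrmM _ _) _.
    by apply: ler_pM; rewrite ?nrm_ge0 // nrmX.
  apply: le_trans (ler_pM (nrm_ge0 _) (nrm_ge0 _) h1 h2) _.
  by apply: eqle; rewrite /K; ring.
have hr : e * al + e * be <= 2^-1.
  have he : e * (2 * (al + be + 1)) = 1 by rewrite mulVf // lt0r_neq0 // mulr_gt0.
  nra.
have hr0 : 0 <= e * al + e * be by rewrite addr_ge0 // mulr_ge0 // ltW.
pose n := Num.Def.archi_bound K.
have hK : K < 2 ^+ n := upper_nthrootP (leqnn _).
have K0 : 0 <= K.
  by rewrite /K; apply: mulr_ge0; [exact: mulr_ge0|]; apply: exprn_ge0; exact: nrm_ge0.
have hlt : K * (2^-1) ^+ n < 1.
  by rewrite exprVn ltr_pdivrMr ?exprn_gt0 // mul1r.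
have hd2 : nrm d <= nrm d * (K * (2^-1) ^+ n).
  rewrite {1}(hdn n); apply: le_trans (nrmM _ _) _; apply: ler_wpM2l; first exact: nrm_ge0.
  apply: le_trans (hbound n) _; apply: ler_wpM2l => //.
  exact: expr_le.
apply: nrm_eq0; apply/eqP; rewrite eq_le nrm_ge0 andbT.
have : nrm d * (1 - K * (2^-1) ^+ n) <= 0 by rewrite mulrBr mulr1 subr_le0.
by rewrite pmulr_lle0 // subr_gt0.
Qed.

Lemma scal_mul (s t : R[i]) : (s *: (1 : A)) * (t *: 1) = (s * t) *: 1.
Proof. by rewrite -scalerAl mul1r scalerA. Qed.

Lemma scal_unit (s : R[i]) : s != 0 -> (s *: (1 : A)) * (s^-1 *: 1) = 1.
Proof. by move=> s0; rewrite scal_mul mulfV // scale1r. Qed.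

Lemma scal_inj (c : R[i]) (u v : A) : c *: u = c *: v -> c != 0 -> u = v.
Proof.
move=> h c0; have := congr1 (fun w => c^-1 *: w) h.
by rewrite /= !scalerA mulVf // !scale1r.
Qed.

Lemma finisher x y d V W c3 c4 :
  quasinilpotent nrm x -> quasinilpotent nrm y -> V * W = 1 ->
  d * (V + (2^-1 *: (x - y)) * c3 + (2^-1 *: (x + y)) * c4) = 0 -> d = 0.
Proof.
move=> qx qy hVW h.
have hq : 2^-1 *: (x - y) = (2^-1 : R[i])%:A * (x - y) by rewrite mulr_algl.
have hp : 2^-1 *: (x + y) = (2^-1 : R[i])%:A * (x + y) by rewrite mulr_algl.
rewrite hq hp in h.
set H := (2^-1 : R[i])%:A in h.
apply: (@key_lemma x y d (- (H * (c3 + c4)) * W) (- (H * (c4 - c3)) * W)) => //.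
have e1 : d = d * V * W by rewrite -mulrA hVW mulr1.
have e2 : d * V = - (d * (H * (x - y) * c3 + H * (x + y) * c4)).
  have : d * V + d * (H * (x - y) * c3 + H * (x + y) * c4) = 0.
    by rewrite -mulrDr addrA.
  by move/eqP; rewrite addr_eq0 => /eqP.
by rewrite {1}e1 e2; ring.
Qed.

Lemma ident_i (ep em J p q w1 w2 w3 w4 : A) :
  (ep * (1 + J * p + (J * p) ^+ 2 * w3) - em * (1 + - (J * p) + (- (J * p)) ^+ 2 * w4)) *
  ((1 + J * q + (J * q) ^+ 2 * w1) - (1 + - (J * q) + (- (J * q)) ^+ 2 * w2))
  = q * ((ep - em) * (J + J) + q * (J ^+ 2 * (w1 - w2) * (ep - em)) +
     p * ((ep * (J + J ^+ 2 * p * w3) + em * (J - J ^+ 2 * p * w4)) *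
          ((J + J) + J ^+ 2 * q * (w1 - w2)))).
Proof. ring. Qed.

Lemma ident_ii (e J p q w1 w2 w3 w4 : A) :
  (e * (1 + J * p + (J * p) ^+ 2 * w3) - e * (1 + - (J * p) + (- (J * p)) ^+ 2 * w4)) *
  ((1 + J * q + (J * q) ^+ 2 * w1) - (1 + - (J * q) + (- (J * q)) ^+ 2 * w2))
  = (p * q) * (e * (J + J) * (J + J) + q * (e * (J + J) * (J ^+ 2 * (w1 - w2))) +
     p * (e * J ^+ 2 * (w3 - w4) * ((J + J) + J ^+ 2 * q * (w1 - w2)))).
Proof. ring. Qed.

Lemma quadJ (j : R[i]) z : exists w,
  Eexp (j *: z) = 1 + j%:A * z + (j%:A * z) ^+ 2 * w.
Proof. by have [w h] := Eexp_quad (j *: z); exists w; rewrite mulr_algl. Qed.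

Lemma quadJN (j : R[i]) z : exists w,
  Eexp (- (j *: z)) = 1 + - (j%:A * z) + (- (j%:A * z)) ^+ 2 * w.
Proof. by have [w h] := Eexp_quad (- (j *: z)); exists w; rewrite mulr_algl. Qed.

Lemma main_res x y (lambda : R[i]) :
  quasinilpotent nrm x -> quasinilpotent nrm y ->
  ((~ (exists k : int, lambda = ((pi * k%:~R : R)%:C)%C)) ->
     cosA nrm (lambda%:A + x) = cosA nrm (lambda%:A + y) -> x = y) /\
  ((exists k : int, lambda = ((pi * k%:~R : R)%:C)%C) ->
     cosA nrm (lambda%:A + x) = cosA nrm (lambda%:A + y) -> x ^+ 2 = y ^+ 2).
Proof.
move=> qx qy.
pose j := ('i%C : R[i]).
pose p := (2^-1 : R[i]) *: (x + y); pose q := (2^-1 : R[i]) *: (x - y).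
have h2 : (2 : R[i]) != 0 by rewrite pnatr_eq0.
have hx : x = p + q.
  rewrite /p /q -scalerDr.
  have -> : x + y + (x - y) = (2 : R[i]) *: x by rewrite scaler_nat mulr2n; ring.
  by rewrite scalerA mulVf // scale1r.
have hy : y = p - q.
  rewrite /p /q -scalerBr.
  have -> : x + y - (x - y) = (2 : R[i]) *: y by rewrite scaler_nat mulr2n; ring.
  by rewrite scalerA mulVf // scale1r.
pose L := lambda%:A + p.
have hux : lambda%:A + x = L + q by rewrite {1}hx addrA.
have huy : lambda%:A + y = L - q by rewrite {1}hy addrA.
have hcx : cosA nrm (L + q) =
    2^-1 *: (Eexp (j *: L) * Eexp (j *: q) + Eexp (- (j *: L)) * Eexp (- (j *: q))).
  by rewrite cosA_E [j *: (L + q)]scalerDr opprD !EexpD.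
have hcy : cosA nrm (L - q) =
    2^-1 *: (Eexp (j *: L) * Eexp (- (j *: q)) + Eexp (- (j *: L)) * Eexp (j *: q)).
  rewrite cosA_E [j *: (L - q)]scalerBr !EexpD.
  have -> : - (j *: L - j *: q) = - (j *: L) + j *: q by rewrite opprB addrC.
  by rewrite EexpD.
have key0 : cosA nrm (lambda%:A + x) = cosA nrm (lambda%:A + y) ->
  (Eexp (j *: L) - Eexp (- (j *: L))) * (Eexp (j *: q) - Eexp (- (j *: q))) = 0.
  rewrite hux huy hcx hcy => /scal_inj he.
  have {}he := he (invr_neq0 h2).
  have -> : (Eexp (j *: L) - Eexp (- (j *: L))) * (Eexp (j *: q) - Eexp (- (j *: q))) =
     (Eexp (j *: L) * Eexp (j *: q) + Eexp (- (j *: L)) * Eexp (- (j *: q))) -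
     (Eexp (j *: L) * Eexp (- (j *: q)) + Eexp (- (j *: L)) * Eexp (j *: q)) by ring.
  by rewrite he subrr.
have [w1 h1] := quadJ j q.
have [w2 h2'] := quadJN j q.
have [w3 h3] := quadJ j p.
have [w4 h4] := quadJN j p.
clear hux huy hcx hcy.
move: lambda @L key0 => [a b] L key0.
have hjl : j * (a +i* b)%C = ((- b) +i* a)%C by rewrite /j; simpc.
have hjl' : - (j * (a +i* b)%C) = (b +i* (- a))%C by rewrite hjl; simpc.
pose wp := ((expR (- b) * cos a) +i* (expR (- b) * sin a))%C.
pose wm := ((expR b * cos a) +i* (- (expR b * sin a)))%C.
have hU : Eexp (j *: L) = (wp *: 1) * Eexp (j *: p).
  rewrite /L scalerDr scalerA EexpD hjl Eexp_scal scal_c //.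
have hV : Eexp (- (j *: L)) = (wm *: 1) * Eexp (- (j *: p)).
  rewrite /L scalerDr opprD scalerA -scaleNr EexpD hjl' Eexp_scal scal_c cosN sinN.
  by rewrite mulrN.
have hjj : j + j != 0.
  apply/negP => /eqP /(congr1 (@complex.Im R)) /= hh; move: hh; lra.
split.
  move=> nk /key0; rewrite hU hV h1 h2' h3 h4 ident_i => hq.
  have wpm : wp - wm != 0.
    rewrite subr_eq0; apply/negP => /eqP /omega_eq [sa b0]; apply: nk.
    have [k hk] := @sin_eq0_int _ a sa.
    by exists k; rewrite b0 complexr0 hk.
  have q0 : q = 0.
    apply: (@finisher x y q ((wp *: 1 - wm *: 1) * (j%:A + j%:A))
                      (((wp - wm) * (j + j))^-1 *: 1) _ _ qx qy) => //; last exact: hq.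
    by rewrite -scalerBl -scalerDl scal_mul scal_unit // mulf_neq0.
  by rewrite hx hy q0 addr0 subr0.
move=> [k hk] /key0.
have ha : a = pi * k%:~R by move: hk => /(congr1 (@complex.Re R)).
have hb : b = 0 by move: hk => /(congr1 (@complex.Im R)).
have hw : wm = wp.
  by rewrite /wm /wp hb ha sin_pi_int oppr0 mulr0 oppr0.
rewrite hU hV hw h1 h2' h3 h4 ident_ii => hq.
have wp0 : wp != 0 by apply: omega_neq0; exact: expR_gt0.
have pq0 : p * q = 0.
  apply: (@finisher x y (p * q) (wp *: 1 * (j%:A + j%:A) * (j%:A + j%:A))
             ((wp * (j + j) * (j + j))^-1 *: 1) _ _ qx qy) => //; last exact: hq.
  by rewrite -scalerDl !scal_mul mulfV ?scale1r // !mulf_neq0.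
apply/eqP; rewrite -subr_eq0; apply/eqP.
have -> : x ^+ 2 - y ^+ 2 = 4%:R * (p * q) by rewrite {1}hx hy; ring.
by rewrite pq0 mulr0.
Qed.
End Ban.

Local Close Scope classical_set_scope.

Theorem lemma2p2 (R : realType) (A : comAlgType R[i]) (nrm : A -> R)
    (hA : banach_algebra_norm nrm) (x y : A) (lambda : R[i]) :
  quasinilpotent nrm x -> quasinilpotent nrm y ->
  ((~ (exists k : int, lambda = ((pi * k%:~R : R)%:C)%C)) ->
     cosA nrm (lambda%:A + x) = cosA nrm (lambda%:A + y) -> x = y) /\
  ((exists k : int, lambda = ((pi * k%:~R : R)%:C)%C) ->
     cosA nrm (lambda%:A + x) = cosA nrm (lambda%:A + y) -> x ^+ 2 = y ^+ 2).
Proof. exact: (@main_res R A nrm hA x y lambda). Qed.
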